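(* For all even integers $n\ge2$ and real numbers $a\ge1$, $x\in(0,\pi)$, we have $S^*_{n,a}(x)\ge 2\sin(x)$. Equality holds if and only if $n=2$, $a=1$ (any $x$), or $n=4$, $a=1$, $x=\pi/2$.
   Context: For a real number $a$ and integers $0\le m$, $\binom{m+a}{m}=\frac{(a+1)(a+2)\cdots(a+m)}{m!}$ (equal to $1$ when $m=0$). For an integer $n\ge1$, $S^*_{n,a}(x)=\sum_{1\le j\le n,\ j\text{ odd}}\binom{n+a-j}{n-j}\sin(jx)$. *)

(* Defs.v *)
From Stdlib Require Import Reals Lra Lia Arith.
Open Scope R_scope.

(* Generalized binomial: gbinom m a = binom(m+a, m) = (a+1)(a+2)...(a+m)/m!  (= 1 for m = 0). *)
Fixpoint rising_prod (m : nat) (a : R) : R :=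
  match m with
  | O => 1
  | S k => rising_prod k a * (a + INR (S k))
  end.

Definition gbinom (m : nat) (a : R) : R := rising_prod m a / INR (fact m).

Definition Sstar (n : nat) (a x : R) : R :=
  sum_f_R0 (fun j => if Nat.odd j then gbinom (n - j) a * sin (INR j * x) else 0) n.

(* Main.v *)
Require Import Defs.
From Stdlib Require Import Reals Lra Lia Arith.
Open Scope R_scope.

Lemma gbinom_S m a : gbinom (S m) a = gbinom m a * (a + INR (S m)) / INR (S m).
Proof.
  unfold gbinom. change (rising_prod (S m) a) with (rising_prod m a * (a + INR (S m))).
  rewrite fact_simpl, mult_INR.
  assert (INR (fact m) <> 0) by (apply not_0_INR; apply fact_neq_0).
  assert (INR (S m) <> 0) by (apply not_0_INR; lia).
  field; split; auto.
Qed.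

Lemma gbinom_ge m a : 1 <= a -> gbinom m a >= INR m + 1.
Proof.
  intro Ha. induction m.
  - unfold gbinom; simpl; lra.
  - rewrite gbinom_S. rewrite S_INR in *.
    assert (0 <= INR m) by apply pos_INR.
    apply Rle_ge. apply Rmult_le_reg_r with (INR m + 1); [lra|].
    unfold Rdiv. rewrite Rmult_assoc, Rinv_l by lra. nra.
Qed.

Lemma gbinom_diff m a : 1 <= a -> gbinom (S (S m)) a - gbinom m a >= 2.
Proof.
  intro Ha. rewrite !gbinom_S. pose proof (gbinom_ge m a Ha).
  rewrite !S_INR in *. assert (0 <= INR m) by apply pos_INR.
  set (g := gbinom m a) in *. set (r := INR m) in *.
  assert (g * (a + (r + 1)) / (r + 1) * (a + (r + 1 + 1)) / (r + 1 + 1)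
     = g * ((a + (r + 1)) * (a + (r + 1 + 1))) / ((r+1)*(r+1+1))) by (field; lra).
  rewrite H1. apply Rle_ge.
  apply Rplus_le_reg_r with g. ring_simplify.
  apply Rmult_le_reg_r with ((r+1)*(r+1+1)); [nra|].
  unfold Rdiv. rewrite Rmult_assoc, Rinv_l by nra.
  assert ((a + (r + 1)) * (a + (r + 1 + 1)) - (r+1)*(r+2) >= 2*(r+2)) by nra.
  nra.
Qed.

Lemma sin_sq_diff A B : sin (A + B) * sin (A - B) = sin A ^ 2 - sin B ^ 2.
Proof.
  rewrite sin_plus, sin_minus. pose proof (sin2_cos2 A). pose proof (sin2_cos2 B).
  unfold Rsqr in *. nra.
Qed.

Lemma Dsum x k : sin x * sum_f_R0 (fun l => sin (INR (2*l+1) * x)) k = sin (INR (k+1) * x) ^ 2.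
Proof.
  induction k.
  - simpl. rewrite Rmult_1_l. ring.
  - rewrite tech5, Rmult_plus_distr_l, IHk.
    pose proof (sin_sq_diff (INR (S k + 1) * x) (INR (k+1) * x)).
    replace (INR (S k + 1) * x + INR (k + 1) * x) with (INR (2 * S k + 1) * x) in H
      by (rewrite !plus_INR, !mult_INR, !S_INR; simpl; ring).
    replace (INR (S k + 1) * x - INR (k + 1) * x) with x in H
      by (rewrite !plus_INR, !S_INR; ring).
    lra.
Qed.

Lemma abel u v N : sum_f_R0 (fun k => u k * v k) (S N) =
  u (S N) * sum_f_R0 v (S N) + sum_f_R0 (fun k => (u k - u (S k)) * sum_f_R0 v k) N.
Proof.
  induction N.
  - simpl. ring.
  - rewrite (tech5 (fun k => u k * v k) (S N)), IHN.
    rewrite (tech5 (fun k => (u k - u (S k)) * sum_f_R0 v k) N).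
    rewrite (tech5 v (S N)). ring.
Qed.

Lemma split_even g M : sum_f_R0 g (2*M+2) = g 0%nat + sum_f_R0 (fun k => g (2*k+1)%nat + g (2*k+2)%nat) M.
Proof.
  induction M.
  - simpl. ring.
  - replace (2 * S M + 2)%nat with (S (S (2*M+2))) by lia.
    rewrite !tech5, IHM.
    replace (S (2*M+2)) with (2 * S M + 1)%nat by lia.
    replace (S (2*S M+1)) with (2 * S M + 2)%nat by lia. ring.
Qed.

Lemma sum_ge0 f n : (forall k, 0 <= f k) -> sum_f_R0 f n >= f 0%nat.
Proof.
  intro H. induction n; simpl; [lra|]. specialize (H (S n)). lra.
Qed.

Lemma sum_ge0' f n : (forall k, (k <= n)%nat -> 0 <= f k) -> sum_f_R0 f n >= f 0%nat.
Proof.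
  intro H. induction n; simpl; [lra|].
  assert (0 <= f (S n)) by (apply H; lia).
  assert (sum_f_R0 f n >= f 0%nat) by (apply IHn; intros; apply H; lia). lra.
Qed.

Lemma Sstar_form M a x : Sstar (2*M+2) a x =
  sum_f_R0 (fun k => gbinom (2*(M-k)+1) a * sin (INR (2*k+1) * x)) M.
Proof.
  unfold Sstar. rewrite split_even. simpl (Nat.odd 0). rewrite Rplus_0_l.
  apply sum_eq. intros i Hi.
  replace (2*i+1)%nat with (1 + 2*i)%nat at 1 by lia.
  replace (2*i+2)%nat with (0 + 2*(i+1))%nat at 1 by lia.
  rewrite !Nat.odd_add_mul_2. simpl (Nat.odd 1). simpl (Nat.odd 0).
  replace (2*M+2 - (2*i+1))%nat with (2*(M-i)+1)%nat by lia.
  change (Nat.odd 1) with true; change (Nat.odd 0) with false; cbv beta iota; ring.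
Qed.

Lemma big_case M a x : (2 <= M)%nat -> 1 <= a -> 0 < x -> x < PI ->
  Sstar (2*M+2) a x > 2 * sin x.
Proof.
  intros HM Ha Hx0 HxP.
  pose proof (sin_gt_0 x Hx0 HxP) as Hs.
  rewrite Sstar_form.
  set (c := fun k => gbinom (2*(M-k)+1) a).
  set (v := fun l => sin (INR (2*l+1) * x)).
  change (sum_f_R0 (fun k => c k * v k) M > 2 * sin x).
  destruct M as [|N]; [lia|].
  rewrite abel.
  assert (Hc : forall k, (k <= N)%nat -> c k - c (S k) >= 2).
  { intros k Hk. unfold c. replace (2 * (S N - k) + 1)%nat with (S (S (2 * (S N - S k) + 1))) by lia.
    apply gbinom_diff; auto. }
  assert (HcM : c (S N) = a + 1).
  { unfold c. replace (2 * (S N - S N) + 1)%nat with 1%nat by lia.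
    unfold gbinom; simpl. lra. }
  apply Rmult_gt_reg_l with (sin x); [lra|].
  rewrite Rmult_plus_distr_l.
  assert (HD : forall k, sin x * sum_f_R0 v k = sin (INR (k+1) * x) ^ 2) by (intro; apply Dsum).
  rewrite (Rmult_comm (c (S N))), <- (Rmult_assoc (sin x) (sum_f_R0 v (S N))), HD.
  rewrite scal_sum.
  destruct N as [|N']; [lia|].
  rewrite tech5.
  set (f := fun i => (c i - c (S i)) * sum_f_R0 v i * sin x).
  assert (Hsum : sum_f_R0 f N' >= f 0%nat).
  { apply sum_ge0'. intros k Hk. unfold f. rewrite Rmult_assoc, (Rmult_comm _ (sin x)), HD.
    specialize (Hc k ltac:(lia)). apply Rmult_le_pos; [lra|]. apply pow2_ge_0. }
  assert (Hf0v : f 0%nat >= 2 * (sin x * sin x)).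
  { unfold f. rewrite Rmult_assoc, (Rmult_comm _ (sin x)), HD.
    specialize (Hc 0%nat ltac:(lia)). simpl (INR (0+1)). rewrite Rmult_1_l. nra. }
  replace ((c (S N') - c (S (S N'))) * sum_f_R0 v (S N') * sin x) with ((c (S N') - c (S (S N'))) * (sin x * sum_f_R0 v (S N'))) by ring. rewrite HD.
  specialize (Hc (S N') ltac:(lia)).
  set (A := INR (S N' + 1) * x).
  assert (Hst : INR (S (S N') + 1) * x = A + x) by (unfold A; rewrite !plus_INR, !S_INR; simpl; ring).
  rewrite Hst, sin_plus.
  assert (Hpos : 0 < sin A ^ 2 + (sin A * cos x + cos A * sin x) ^ 2).
  { pose proof (sin2_cos2 A). unfold Rsqr in H.
    destruct (Req_dec (sin A) 0) as [E|E].
    - rewrite E in *. assert (cos A * cos A = 1) by lra.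
      nra.
    - assert (0 < sin A ^ 2) by (simpl; rewrite Rmult_1_r; apply Rsqr_pos_lt; auto).
      pose proof (pow2_ge_0 (sin A * cos x + cos A * sin x)). lra. }
  assert (0 <= sin A ^ 2) by apply pow2_ge_0.
  assert (0 <= (sin A * cos x + cos A * sin x) ^ 2) by apply pow2_ge_0.
  rewrite HcM. nra.
Qed.

Lemma S2 a x : Sstar 2 a x = (a + 1) * sin x.
Proof. unfold Sstar, gbinom; simpl. replace (1*x) with x by ring. field. Qed.

Lemma S4 a x : Sstar 4 a x = (a+1)*(a+2)*(a+3)/6 * sin x + (a+1) * sin (3 * x).
Proof. unfold Sstar, gbinom; simpl. replace (1*x) with x by ring. replace ((1+1+1)*x) with (3*x) by ring. field. Qed.

Lemma sin3 x : sin (3 * x) = sin x * (3 - 4 * sin x ^ 2).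
Proof.
  replace (3 * x) with (2 * x + x) by ring. rewrite sin_plus, sin_2a, cos_2a.
  pose proof (sin2_cos2 x). unfold Rsqr in H. apply Rminus_diag_uniq. transitivity (3 * sin x * (sin x * sin x + cos x * cos x - 1)); [ring|]. rewrite H. ring.
Qed.

Lemma S4' a x : Sstar 4 a x - 2 * sin x = sin x * ((a-1)*(a*a+7*a+12)/6 + 4*(a+1)*(cos x)^2).
Proof.
  rewrite S4, sin3. pose proof (sin2_cos2 x). unfold Rsqr in H.
  assert (cos x ^ 2 = 1 - sin x ^ 2) by (simpl; rewrite !Rmult_1_r; lra). rewrite H0. field.
Qed.

Lemma cos0 x : 0 < x -> x < PI -> cos x = 0 -> x = PI / 2.
Proof.
  intros H1 H2 H3. destruct (total_order_T x (PI/2)) as [[L|E]|G]; auto.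
  - pose proof (cos_gt_0 x ltac:(pose proof PI_RGT_0; lra) L). lra.
  - pose proof (cos_lt_0 x G ltac:(lra)). lra.
Qed.

Theorem theorem3p6 (n : nat) (a x : R) :
  Nat.Even n -> (2 <= n)%nat -> 1 <= a -> 0 < x -> x < PI ->
  Sstar n a x >= 2 * sin x /\
  (Sstar n a x = 2 * sin x <->
     ((n = 2%nat /\ a = 1) \/ (n = 4%nat /\ a = 1 /\ x = PI / 2))).
Proof.
  intros [p Hp] Hn Ha Hx0 HxP. subst n.
  pose proof (sin_gt_0 x Hx0 HxP) as Hs.
  destruct p as [|[|[|M]]]; [lia| | |].
  - simpl (2*1)%nat. rewrite S2. split; [nra|]. split.
    + intro E. left. split; auto. nra.
    + intros [[_ E]|[E _]]; [subst; ring| lia].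
  - simpl (2*2)%nat. pose proof (S4' a x) as E4.
    assert (0 <= (a-1)*(a*a+7*a+12)/6) by (apply Rmult_le_pos; [|lra]; apply Rmult_le_pos; nra).
    assert (0 <= 4*(a+1)*(cos x)^2) by (apply Rmult_le_pos; [lra|]; apply pow2_ge_0).
    split; [nra|]. split.
    + intro E. right. split; auto.
      assert (Z : (a-1)*(a*a+7*a+12)/6 + 4*(a+1)*(cos x)^2 = 0).
      { apply Rmult_eq_reg_l with (sin x); [|lra]. rewrite <- E4. lra. }
      assert ((a-1)*(a*a+7*a+12)/6 = 0) by lra.
      assert (4*(a+1)*(cos x)^2 = 0) by lra.
      split; [nra|]. apply cos0; auto. nra.
    + intros [[E _]|[_ [Ea Ex]]]; [lia|]. subst a x. rewrite cos_PI2 in E4. lra.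
  - replace (2 * S (S (S M)))%nat with (2 * S (S M) + 2)%nat by lia.
    pose proof (big_case (S (S M)) a x ltac:(lia) Ha Hx0 HxP).
    split; [lra|]. split; [lra|]. intros [[E _]|[E _]]; lia.
Qed.
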